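(* Let $X$ be a Banach space and $J\subset X$ a closed subspace such that $(X,J)$ has the CQLP, and let $\pi:X\to X/J$ be the quotient map. Let $(x_n)_{n\ge1}\subset X$ be such that $(\pi(x_n))_{n\ge1}$ is a relatively compact sequence in $X/J$. Then there is a relatively compact sequence $(z_n)_{n\ge1}\subset X$ with $\pi(z_n)=\pi(x_n)$ for all $n$ and $\sup_n\|z_n\|=\sup_n\|\pi(x_n)\|$.
   Context: The pair $(X,J)$ has the compact quotient lifting property (CQLP) if for every Banach space $Z$ and every compact linear operator $T:Z\to X/J$ there is a compact linear operator $S:Z\to X$ with $\pi\circ S=T$ and $\|S\|=\|T\|$. *)

(* Defs.v *)
From HB Require Import structures.
From mathcomp Require Import all_boot all_order all_algebra.
From mathcomp Require Import all_classical all_reals all_analysis.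
Set Implicit Arguments. Unset Strict Implicit. Unset Printing Implicit Defensive.
Import Order.TTheory GRing.Theory Num.Theory.
Import numFieldNormedType.Exports.
Local Open Scope classical_set_scope.
Local Open Scope ring_scope.

Definition rel_compact (T : topologicalType) (A : set T) : Prop :=
  compact (closure A).

Definition is_subspace (R : realType) (X : normedModType R) (J : set X) : Prop :=
  J 0 /\ (forall a b, J a -> J b -> J (a + b)) /\ (forall (k : R) a, J a -> J (k *: a)).

Definition opnorm (R : realType) (Z Y : normedModType R) (T : Z -> Y) : \bar R :=
  ereal_sup [set (`|T z|)%:E | z in closed_ball (0 : Z) 1].

Definition compact_op (R : realType) (Z Y : normedModType R) (T : Z -> Y) : Prop :=
  rel_compact (T @` closed_ball (0 : Z) 1).

(* pi : X -> Q is (a realization of) the quotient map X -> X/J: a surjective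
   linear map with kernel J such that Q carries the quotient norm
   ||pi x|| = inf_{j in J} ||x - j||.  This determines (Q, pi) up to
   isometric isomorphism as X/J with its canonical projection. *)
Definition is_quotient_map (R : realType) (X Q : normedModType R)
    (J : set X) (pi : {linear X -> Q}) : Prop :=
  (forall q : Q, exists x : X, pi x = q) /\
  (forall x : X, pi x = 0 <-> J x) /\
  (forall x : X, (`|pi x|)%:E = ereal_inf [set (`|x - j|)%:E | j in J]).

Definition CQLP (R : realType) (X Q : normedModType R) (pi : {linear X -> Q}) : Prop :=
  forall (Z : completeNormedModType R) (T : {linear Z -> Q}),
    compact_op T ->
    exists S : {linear Z -> X},
      compact_op S /\ (forall z : Z, pi (S z) = T z) /\ opnorm S = opnorm T.

(* Main.v *)
Require Import Defs.
From HB Require Import structures.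
From mathcomp Require Import all_boot all_order all_algebra.
From mathcomp Require Import all_classical all_reals all_analysis.
From mathcomp Require Import lra.
Import Order.TTheory GRing.Theory Num.Theory.
Import numFieldNormedType.Exports.
Local Open Scope classical_set_scope.
Local Open Scope ring_scope.
Section L1sec.
Context {R : realType}.

Definition psum (a : nat -> R) (N : nat) : R := \sum_(n < N) `|a n|.
Definition l1b (a : nat -> R) : Prop := exists M, forall N, psum a N <= M.

Lemma psum_ge0 a N : 0 <= psum a N.
Proof. by apply: sumr_ge0 => i _. Qed.

Lemma psum_mono a N K : (N <= K)%N -> psum a N <= psum a K.
Proof.
move=> NK; rewrite /psum -(subnKC NK) big_split_ord /= lerDl.
by apply: sumr_ge0.
Qed.

Record L1 := MkL1 { l1v : nat -> R; l1P : `[< l1b l1v >] }.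
HB.instance Definition _ := [isSub for l1v].
HB.instance Definition _ := [Choice of L1 by <:].

Lemma l1bP (a : L1) : l1b (l1v a).
Proof. exact/asboolP/l1P. Qed.

Lemma l1b0 : l1b (fun _ => 0).
Proof. by exists 0 => N; rewrite /psum big1 // => i _; rewrite normr0. Qed.

Lemma l1bD a b : l1b a -> l1b b -> l1b (fun n => a n + b n).
Proof.
move=> [M1 H1] [M2 H2]; exists (M1 + M2) => N.
apply: le_trans (lerD (H1 N) (H2 N)).
rewrite /psum -big_split /=; apply: ler_sum => i _; exact: ler_normD.
Qed.

Lemma psumZ k a N : psum (fun n => k * a n) N = `|k| * psum a N.
Proof. by rewrite /psum mulr_sumr; apply: eq_bigr => i _; rewrite normrM. Qed.

Lemma l1bZ k a : l1b a -> l1b (fun n => k * a n).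
Proof.
move=> [M H]; exists (`|k| * M) => N; rewrite psumZ.
by apply: ler_wpM2l => //.
Qed.

Definition l1zero := MkL1 (fun _ => 0) (asboolT l1b0).
Definition l1add (a b : L1) := MkL1 (fun n => l1v a n + l1v b n) (asboolT (l1bD _ _ (l1bP a) (l1bP b))).
Definition l1scale k (a : L1) := MkL1 (fun n => k * l1v a n) (asboolT (l1bZ k _ (l1bP a))).
Definition l1opp (a : L1) := l1scale (-1) a.

Lemma l1_ext (a b : L1) : (forall n, l1v a n = l1v b n) -> a = b.
Proof. by move=> h; apply: val_inj; apply: funext. Qed.

Lemma l1addA : associative l1add.
Proof. by move=> a b c; apply: l1_ext => n /=; rewrite addrA. Qed.
Lemma l1addC : commutative l1add.
Proof. by move=> a b; apply: l1_ext => n /=; rewrite addrC. Qed.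
Lemma l1add0 : left_id l1zero l1add.
Proof. by move=> a; apply: l1_ext => n /=; rewrite add0r. Qed.
Lemma l1addN : left_inverse l1zero l1opp l1add.
Proof. by move=> a; apply: l1_ext => n /=; rewrite mulN1r addNr. Qed.

HB.instance Definition _ := GRing.isZmodule.Build L1 l1addA l1addC l1add0 l1addN.

Lemma l1scaleA a b v : l1scale a (l1scale b v) = l1scale (a * b) v.
Proof. by apply: l1_ext => n /=; rewrite mulrA. Qed.
Lemma l1scale1 : left_id 1 l1scale.
Proof. by move=> v; apply: l1_ext => n /=; rewrite mul1r. Qed.
Lemma l1scaleDr : right_distributive l1scale +%R.
Proof. by move=> a u v; apply: l1_ext => n /=; rewrite mulrDr. Qed.
Lemma l1scaleDl v : {morph l1scale^~ v: a b / a + b}.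
Proof. by move=> a b; apply: l1_ext => n /=; rewrite mulrDl. Qed.

HB.instance Definition _ := GRing.Zmodule_isLmodule.Build R L1
  l1scaleA l1scale1 l1scaleDr l1scaleDl.

Lemma l1vD (a b : L1) n : l1v (a + b) n = l1v a n + l1v b n. Proof. by []. Qed.
Lemma l1vZ k (a : L1) n : l1v (k *: a) n = k * l1v a n. Proof. by []. Qed.
Lemma l1vN (a : L1) n : l1v (- a) n = - l1v a n. Proof. by rewrite /= mulN1r. Qed.
Lemma l1v0 n : l1v (0 : L1) n = 0. Proof. by []. Qed.

Definition l1norm (a : L1) : R := sup (range (psum (l1v a))).

Lemma psum_le_norm (a : L1) N : psum (l1v a) N <= l1norm a.
Proof.
apply: ub_le_sup; last by exists N.
by case: (l1bP a) => M HM; exists M => _ [K _ <-].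
Qed.

Lemma norm_le (a : L1) M : (forall N, psum (l1v a) N <= M) -> l1norm a <= M.
Proof. by move=> H; apply: ge_sup; [exists (psum (l1v a) 0); exists 0|move=> _ [K _ <-]]. Qed.

Lemma l1norm_ge0 a : 0 <= l1norm a.
Proof. exact: le_trans (psum_ge0 _ 0) (psum_le_norm _ 0). Qed.

Lemma l1normD x y : l1norm (x + y) <= l1norm x + l1norm y.
Proof.
apply: norm_le => N; apply: le_trans (lerD (psum_le_norm x N) (psum_le_norm y N)).
rewrite /psum -big_split /=; apply: ler_sum => i _; exact: ler_normD.
Qed.

Lemma l1normZ (l : R) (x : L1) : l1norm (l *: x) = `|l| * l1norm x.
Proof.
have E N : psum (l1v (l *: x)) N = `|l| * psum (l1v x) N by rewrite -psumZ.
apply/eqP; rewrite eq_le; apply/andP; split.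
  by apply: norm_le => N; rewrite E; apply: ler_wpM2l => //; exact: psum_le_norm.
have [->|l0] := eqVneq l 0; first by rewrite normr0 mul0r l1norm_ge0.
rewrite -ler_pdivlMl ?normr_gt0 //; apply: norm_le => N.
rewrite ler_pdivlMl ?normr_gt0 // -E; exact: psum_le_norm.
Qed.

Lemma l1norm0 (x : L1) : l1norm x = 0 -> x = 0.
Proof.
move=> h; apply: l1_ext => n; rewrite l1v0; apply/normr0_eq0/eqP.
rewrite eq_le normr_ge0 andbT -h; apply: le_trans (psum_le_norm x n.+1).
by rewrite /psum big_ord_recr /= lerDr; apply: sumr_ge0.
Qed.

HB.instance Definition _ := Lmodule_isNormed.Build R L1 l1normD l1normZ l1norm0.

Lemma l1normE (x : L1) : `|x| = l1norm x. Proof. by []. Qed.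

End L1sec.
Arguments L1 R : clear implicits.
Section L1complete.
Variable R : realType.
Local Notation L1 := (L1 R).

Lemma l1vB (a b : L1) k : l1v (a - b) k = l1v a k - l1v b k.
Proof. by rewrite l1vD l1vN. Qed.

Lemma coord_le (a : L1) k : `|l1v a k| <= `|a|.
Proof.
rewrite l1normE; apply: le_trans (psum_le_norm a k.+1).
by rewrite /psum big_ord_recr /= lerDr; apply: sumr_ge0.
Qed.

Lemma psumB_le (a b : L1) N : psum (fun n => l1v a n - l1v b n) N <= `|a - b|.
Proof.
rewrite l1normE; apply: le_trans (psum_le_norm (a - b) N).
by rewrite /psum le_eqVlt; apply/orP; left; apply/eqP/eq_bigr => i _; rewrite l1vB.
Qed.

Lemma psum_tri (a b c : nat -> R) N :
  psum (fun n => a n - c n) N <= psum (fun n => a n - b n) N + psum (fun n => b n - c n) N.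
Proof.
rewrite /psum -big_split /=; apply: ler_sum => i _.
by rewrite (_ : a i - c i = (a i - b i) + (b i - c i)) ?ler_normD // addrA subrK.
Qed.

Lemma psumC (a b : nat -> R) N : psum (fun n => a n - b n) N = psum (fun n => b n - a n) N.
Proof. by apply: eq_bigr => i _; rewrite distrC. Qed.

Lemma cauchy_ex_of {T : pseudoMetricType R} (F : set_system T) :
  ProperFilter F -> cauchy F -> forall e : R, 0 < e -> exists x, F (ball x e).
Proof.
move=> FF /cauchy_ballP Fc e e0.
have [[A B] /= [FA FB] AB] := Fc e e0.
have [x Ax] := filter_ex FA.
by exists x; apply: filterS FB => y By; exact: (AB (x, y)).
Qed.

Lemma l1_complete (F : set_system L1) : ProperFilter F -> cauchy F -> cvg F.
Proof.
move=> FF /cauchy_ex_of Fc.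
have Gc k : cvg ((fun b : L1 => l1v b k) @ F).
  apply: cauchy_cvg; apply/cauchy_exP => e e0.
  have [x Fx] := Fc e e0; exists (l1v x k).
  change (F [set b : L1 | ball (l1v x k) e (l1v b k)]).
  apply: filterS Fx => b; rewrite -!ball_normE /ball_ /= => h.
  by apply: le_lt_trans h; rewrite -l1vB; exact: coord_le.
pose c k := lim ((fun b : L1 => l1v b k) @ F).
have cP k d : 0 < d -> \forall b \near F, `|c k - l1v b k| < d.
  by move=> d0; move/cvgrPdist_lt: (Gc k); apply.
have key e x : F (ball x e) -> forall a, ball x e a ->
    forall N, psum (fun n => l1v a n - c n) N <= 2 * e.
  move=> Fx a xa N; rewrite leNgt; apply/negP => H.
  set D := psum (fun n => l1v a n - c n) N - 2 * e.
  have D0 : 0 < D by rewrite subr_gt0.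
  set d := D / N.+1%:R.
  have d0 : 0 < d by rewrite divr_gt0.
  have : \forall b \near F, ball x e b /\ forall i : 'I_N, `|c i - l1v b i| < d.
    apply/near_andP; split => //; apply: filter_forall => i; exact: cP.
  move=> /filter_ex [b [xb Hb]].
  have h1 : psum (fun n => l1v a n - l1v b n) N < 2 * e.
    apply: le_lt_trans (psumB_le a b N) _.
    rewrite (_ : a - b = (a - x) + (x - b)); last by rewrite addrA subrK.
    apply: le_lt_trans (ler_normD _ _) _; rewrite mulr2n mulrDl mul1r.
    move: xa xb; rewrite -!ball_normE /ball_ /= distrC => xa xb.
    exact: ltrD.
  have h2 : psum (fun n => l1v b n - c n) N <= N%:R * d.
    rewrite /psum (_ : N%:R * d = \sum_(i < N) d); last by rewrite sumr_const card_ord mulr_natl.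
    by apply: ler_sum => i _; rewrite distrC; apply/ltW/Hb.
  have h3 : N%:R * d < D.
    rewrite /d mulrA ltr_pdivrMr ?ltr0Sn // mulrC ltr_pM2l // ltr_nat //.
  have := psum_tri (l1v a) (l1v b) c N.
  rewrite leNgt => /negP; apply.
  have : psum (fun n => l1v a n - c n) N = 2 * e + D by rewrite /D addrC subrK.
  move=> ->; exact: ltrD h1 (le_lt_trans h2 h3).
have cl1 : l1b c.
  have [x Fx] := Fc 1 ltr01.
  have [a xa] := filter_ex Fx.
  exists (`|a| + 2 * 1) => N; apply: le_trans (lerD (psum_le_norm a N) (key _ _ Fx a xa N)).
  rewrite /psum -big_split /=; apply: ler_sum => i _.
  rewrite {1}(_ : c i = l1v a i - (l1v a i - c i)); last by rewrite opprB addrC subrK.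
  exact: ler_normB.
pose cL := MkL1 c (asboolT cl1).
apply: (cvgP cL); apply/cvg_ballP => e e0.
have e30 : 0 < e / 3 by rewrite divr_gt0.
have [x Fx] := Fc _ e30.
have Fx2 := Fx.
apply: filterS Fx2 => b xb; rewrite -ball_normE /ball_ /=.
apply: (@le_lt_trans _ _ (2 * (e / 3))); last first.
  by rewrite mulrA ltr_pdivrMr // mulrC ltr_pM2l // ltr_nat.
rewrite l1normE; apply: norm_le => N.
rewrite (_ : psum (l1v (cL - b)) N = psum (fun n => l1v b n - c n) N); first exact: key Fx b xb N.
by rewrite psumC; apply: eq_bigr => i _; rewrite l1vB.
Qed.

HB.instance Definition _ := Uniform_isComplete.Build L1 l1_complete.

End L1complete.

Check fun (R : realType) => (L1 R : completeNormedModType R).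
Section Top.
Context {R : realType} {Q : completeNormedModType R}.

Lemma series_nonneg_homo (u : nat -> R) : (forall n, 0 <= u n) ->
  {homo series u : n m / (n <= m)%N >-> n <= m}.
Proof.
move=> u0 n m nm; rewrite /series /= (big_cat_nat _ nm) //= lerDl.
by apply: sumr_ge0 => i _.
Qed.

Lemma lim_norm_le (V : normedModType R) (u : nat -> V) (B : R) :
  cvgn u -> (forall n, `|u n| <= B) -> `|limn u| <= B.
Proof.
move=> cu H; have cn : `|u x| @[x --> \oo] --> `|limn u| by apply: cvg_norm.
rewrite -(cvg_lim _ cn) //; apply: limr_le; first exact: cvgP cn.
by near=> n; exact: H.
Unshelve. all: by end_near.
Qed.

Record bseq := BSeq { bs : nat -> Q; bsM : R; bsP : forall n, `|bs n| <= bsM }.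

Variable b : bseq.

Lemma bsM_ge0 : 0 <= bsM b.
Proof. exact: le_trans (normr_ge0 _) (bsP b 0). Qed.

Definition Tser (a : L1 R) := series (fun n => l1v a n *: bs b n).

Lemma Tnormed_le (a : L1 R) N :
  series (fun n => `|l1v a n *: bs b n|) N <= bsM b * `|a|.
Proof.
apply: le_trans (ler_wpM2l bsM_ge0 (psum_le_norm a N)).
rewrite /series /= /psum big_mkord mulr_sumr; apply: ler_sum => i _.
by rewrite normrZ [X in X <= _]mulrC; apply: ler_wpM2r => //; exact: bsP.
Qed.

Lemma Tser_cvg (a : L1 R) : cvgn (Tser a).
Proof.
apply: normed_cvg; apply: nondecreasing_is_cvgn.
  by move=> n m nm; apply: (@series_nonneg_homo (fun k => `|l1v a k *: bs b k|)).
by exists (bsM b * `|a|) => _ [n _ <-]; exact: (Tnormed_le a n).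
Qed.

Definition Top (a : L1 R) : Q := limn (Tser a).

Lemma Top_le (a : L1 R) : `|Top a| <= bsM b * `|a|.
Proof.
apply: lim_norm_le; first exact: Tser_cvg.
move=> n; apply: le_trans (Tnormed_le a n).
rewrite /Tser /series /=; exact: ler_norm_sum.
Qed.

Lemma TserL k (u v : L1 R) : Tser (k *: u + v) = k *: Tser u + Tser v.
Proof.
apply: funext => N; rewrite !fctE /Tser /series /= scaler_sumr -big_split /=.
by apply: eq_bigr => i _; rewrite scalerDl scalerA.
Qed.

Lemma Top_linear : linear Top.
Proof.
move=> k u v; rewrite /Top TserL limD //; last exact: Tser_cvg.
  by rewrite limZr //; exact: Tser_cvg.
by apply: is_cvgZr; exact: Tser_cvg.
Qed.

End Top.

HB.instance Definition _ (R : realType) (Q : completeNormedModType R) (b : bseq) :=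
  GRing.isLinear.Build R (L1 R) Q *:%R (Top b) (Top_linear b).
Section TB.
Context {R : realType}.

Definition tbounded {V : normedModType R} (A : set V) :=
  forall e : R, 0 < e -> exists s : seq V,
    forall y, A y -> exists2 x, x \in s & `|x - y| < e.

Lemma ultra_seq (T : Type) (F : set_system T) (I : eqType) (s : seq I)
    (P : I -> set T) : UltraFilter F ->
  F [set y | exists2 i, i \in s & P i y] -> exists2 i, i \in s & F (P i).
Proof.
move=> UF; elim: s => [|i s IH] FS.
  have [y [i]] := filter_ex FS; by rewrite in_nil.
have [FP|FN] := in_ultra_setVsetC (P i) UF.
  by exists i => //; rewrite mem_head.
have : F [set y | exists2 j, j \in s & P j y].
  apply: filterS (filterI FS FN) => y [[j]]; rewrite in_cons => /orP [/eqP ->|js] Pj Ni.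
    by case: Ni.
  by exists j.
by move/IH => [j js Fj]; exists j => //; rewrite in_cons js orbT.
Qed.

Lemma tb_compact (V : completeNormedModType R) (A : set V) :
  tbounded A -> compact (closure A).
Proof.
move=> tb; rewrite compact_ultra => F UF FA.
have cF : cauchy F.
  apply: cauchy_exP => e e0.
  have e20 : 0 < e / 2 by rewrite divr_gt0.
  have [s hs] := tb _ e20.
  have sub : closure A `<=` [set y | exists2 x, x \in s & ball x e y].
    move=> y /(_ (ball y (e / 2)) (nbhsx_ballx _ _ e20)) [z [Az yz]].
    have [x xs xz] := hs z Az; exists x => //.
    move: yz; rewrite -ball_normE /ball_ /= => yz.
    rewrite (_ : x - y = (x - z) + (z - y)); last by rewrite addrA subrK.
    apply: le_lt_trans (ler_normD _ _) _; rewrite (splitr e) ltrD //.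
    by rewrite distrC.
  have [x _ Fx] := @ultra_seq _ _ _ s (fun x => ball x e) UF (filterS sub FA).
  by exists x.
have Fc : cvg F by apply: cauchy_cvg.
exists (lim F); split => //.
exact: (@closed_cvg _ _ F _ id (closure A) (@closed_closure _ A) FA _ Fc).
Qed.

Lemma compact_tb (V : normedModType R) (A : set V) : compact A -> tbounded A.
Proof.
move=> cA e e0; rewrite compact_cover in cA.
have [] := cA V A (fun x => ball x e) (fun _ _ => ball_open _ _).
  by move=> y Ay; exists y => //; exact: ballxx.
move=> D' _ cov; exists (mathcomp.finmap.finmap.enum_fset D') => y /cov [x xD xy].
by exists x => //; move: xy; rewrite -ball_normE.
Qed.

Lemma tbS (V : normedModType R) (A B : set V) : A `<=` B -> tbounded B -> tbounded A.
Proof. by move=> AB tb e e0; have [s hs] := tb e e0; exists s => y /AB /hs. Qed.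

End TB.
Arguments tbS {R V A B}.
Arguments compact_tb {R V A}.
Arguments tb_compact {R V A}.
Section Compact.
Context {R : realType}.

Lemma phi_cont {V : normedModType R} m (p : 'I_m -> V) (r : seq 'I_m) :
  continuous (fun c : 'rV[R]_m => \sum_(i <- r) c 0 i *: p i).
Proof.
elim: r => [|i r IH].
  have -> : (fun c : 'rV[R]_m => \sum_(i <- [::]) c 0 i *: p i) = (fun _ => 0).
    by apply: funext => c; rewrite big_nil.
  exact: cst_continuous.
have -> : (fun c : 'rV[R]_m => \sum_(j <- i :: r) c 0 j *: p j) =
    (fun c => c 0 i *: p i) + (fun c => \sum_(j <- r) c 0 j *: p j).
  by apply: funext => c; rewrite big_cons.
move=> x; apply: (@continuousD _ _ _ (fun c : 'rV[R]_m => c 0 i *: p i) (fun c => \sum_(j <- r) c 0 j *: p j)); last exact: IH.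
by apply: continuousZl; exact: coord_continuous.
Qed.

Lemma rV_ball_compact m : compact (closed_ball (0 : 'rV[R]_m) 1).
Proof.
apply: bounded_closed_compact; last exact: closed_ball_closed.
rewrite /bounded_set /bounded_near; near=> M => x.
rewrite closed_ballE // /closed_ball_ /= sub0r normrN => x1.
apply: le_trans x1 _; near: M; exact: nbhs_pinfty_ge.
Unshelve. all: by end_near.
Qed.

Lemma rV_norm_le m (c : 'rV[R]_m) : (forall i, `|c 0 i| <= 1) -> `|c| <= 1.
Proof.
move=> H; change (mx_norm c <= 1); rewrite mx_normrE; apply: bigmax_le => // [[i j]] _ /=.
by rewrite (ord1 i); exact: H.
Qed.

Lemma Top_tb {Q : completeNormedModType R} (b : @bseq R Q) : rel_compact (range (bs b)) ->
  tbounded (Top b @` closed_ball (0 : L1 R) 1).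
Proof.
move=> rc e e0.
set e' := e / 4.
have e'0 : 0 < e' by rewrite divr_gt0.
have [s1 hs1] := tbS (@subset_closure _ _) (compact_tb rc) _ e'0.
set m := size s1.
pose p (i : 'I_m) := nth 0 s1 i.
have hσ n : exists i : 'I_m, `|p i - bs b n| < e'.
  have [x xs xq] := hs1 (bs b n) (ex_intro2 _ _ n I erefl).
  have xi : (index x s1 < m)%N by rewrite index_mem.
  by exists (Ordinal xi); rewrite /p /= nth_index.
pose σ n := proj1_sig (cid (hσ n)).
have σP n : `|p (σ n) - bs b n| < e' := proj2_sig (cid (hσ n)).
pose phi (c : 'rV[R]_m) := \sum_(i < m) c 0 i *: p i.
have cG : compact (phi @` closed_ball (0 : 'rV[R]_m) 1).
  apply: continuous_compact; last exact: rV_ball_compact.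
  by apply: continuous_subspaceT; exact: phi_cont.
have [s2 hs2] := compact_tb cG _ e'0.
exists s2 => _ [a aB <-].
move: aB; rewrite closed_ballE // /closed_ball_ /= sub0r normrN => a1.
have [N HN] : exists N, `|Top b a - Tser b a N| < e'.
  have := Tser_cvg b a; move/cvgrPdist_lt => /(_ _ e'0) /filter_ex [N HN].
  by exists N; rewrite -[Top b a]/(limn (Tser b a)).
pose c : 'rV[R]_m := \row_i \sum_(n < N | σ n == i) l1v a n.
have c1 : `|c| <= 1.
  apply: rV_norm_le => i; rewrite mxE; apply: le_trans (ler_norm_sum _ _ _) _.
  apply: le_trans a1; apply: le_trans (psum_le_norm a N).
  by rewrite /psum [X in _ <= X](bigID (fun n : 'I_N => σ n == i)) /= lerDl sumr_ge0.
have cB : closed_ball (0 : 'rV[R]_m) 1 c.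
  by rewrite closed_ballE // /closed_ball_ /= sub0r normrN.
have [y ys yg] := hs2 (phi c) (ex_intro2 _ _ c cB erefl).
have hg : `|phi c - Tser b a N| <= e'.
  have -> : phi c = \sum_(n < N) l1v a n *: p (σ n).
    rewrite /phi (partition_big (fun n : 'I_N => σ n) xpredT) //=.
    apply: eq_bigr => i _; rewrite mxE scaler_suml; apply: eq_bigr => n /eqP <-.
    by [].
  rewrite /Tser /series /= big_mkord -sumrB.
  apply: le_trans (ler_norm_sum _ _ _) _.
  apply: le_trans (_ : \sum_(n < N) `|l1v a n| * e' <= e').
    apply: ler_sum => n _; rewrite -scalerBr normrZ ler_wpM2l //; exact: ltW.
  rewrite -mulr_suml -[X in _ <= X]mul1r ler_wpM2r //; first exact: ltW.
  by apply: le_trans a1; exact: psum_le_norm.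
exists y => //.
rewrite (_ : y - Top b a = (y - phi c) + (phi c - Tser b a N) + (Tser b a N - Top b a)); last first.
  by rewrite !addrA subrK subrK.
apply: le_lt_trans (ler_normD _ _) _.
apply: (@lt_le_trans _ _ (e' + e' + e')).
  apply: ltrD; last by rewrite distrC.
  apply: le_lt_trans (ler_normD _ _) _.
  by rewrite addrC; apply: ler_ltD.
rewrite /e'; lra.
Qed.

End Compact.
Section Delta.
Context {R : realType}.

Definition delta (n : nat) : nat -> R := fun k => (k == n)%:R.

Lemma psum_delta n N : psum (delta n) N = (n < N)%:R.
Proof.
elim: N => [|N IH]; first by rewrite /psum big_ord0.
rewrite /psum big_ord_recr /= -/(psum _ _) IH /delta.
change ((n < N)%:R + `|(N == n)%:R| = (n < N.+1)%:R :> R).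
case: (ltngtP n N) => h.
- by rewrite normr0 addr0 ltnS ltnW.
- by rewrite normr0 addr0 ltnS leqNgt h.
- by rewrite h normr1 add0r ltnSn.
Qed.

Lemma delta_l1 n : l1b (delta n).
Proof. by exists 1 => N; rewrite psum_delta; case: (n < N)%N. Qed.

Definition eL n : L1 R := MkL1 (delta n) (asboolT (delta_l1 n)).

Lemma eL_ball n : closed_ball (0 : L1 R) 1 (eL n).
Proof.
rewrite closed_ballE // /closed_ball_ /= sub0r normrN l1normE.
by apply: norm_le => N; rewrite /= psum_delta; case: (n < N)%N.
Qed.

Lemma Top_eL {Q : completeNormedModType R} (b : @bseq R Q) n : Top b (eL n) = bs b n.
Proof.
apply: cvg_lim => //; apply: cvg_near_cst; near=> N.
rewrite /Tser /series /= big_mkord.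
have nN : (n < N)%N by near: N; exists n.+1 => //.
rewrite (bigD1 (Ordinal nN)) //= /delta eqxx scale1r big1 ?addr0 // => i ni.
have -> : (nat_of_ord i == n) = false.
  by apply/negbTE; apply: contra ni => /eqP ei; apply/eqP/val_inj.
by rewrite scale0r.
Unshelve. all: by end_near.
Qed.

End Delta.

Theorem proposition3 (R : realType) (X Q : completeNormedModType R)
    (J : set X) (pi : {linear X -> Q}) :
  closed J -> is_subspace J -> is_quotient_map J pi -> CQLP pi ->
  forall x : nat -> X, rel_compact (range (fun n => pi (x n))) ->
  exists z : nat -> X,
    rel_compact (range z) /\
    (forall n, pi (z n) = pi (x n)) /\
    ereal_sup (range (fun n => (`|z n|)%:E)) =
    ereal_sup (range (fun n => (`|pi (x n)|)%:E)).
Proof.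
move=> cJ [J0 _] [_ [_ qn]] cqlp x rc.
pose q := fun n => pi (x n).
have ubq : has_ubound (range (fun n => `|q n|)).
  have : \forall M \near +oo, globally (closure (range q)) [set y | `|y| <= M].
    exact: (compact_bounded rc).
  move=> /filter_ex [M HM].
  exists M => _ [n _ <-]; apply: HM; apply: subset_closure; by exists n.
pose Mq := sup (range (fun n => `|q n|)).
have hM n : `|q n| <= Mq by apply: ub_le_sup => //; exists n.
pose bq := @BSeq R Q q Mq hM.
have cT : compact_op (Top bq).
  by apply: tb_compact; exact: (Top_tb bq rc).
have [S [cS [piS nS]]] := cqlp (L1 R) (Top bq) cT.
exists (fun n => S (eL n)); split; [|split].
- rewrite /rel_compact.
  apply: (subclosed_compact _ cS); first exact: closed_closure.
  apply: closureS => _ [n _ <-]; exists (eL n) => //; exact: eL_ball.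
- by move=> n; rewrite piS; exact: (Top_eL bq n).
have sqE : ereal_sup (range (fun n => (`|pi (x n)|)%:E)) = Mq%:E.
  rewrite -ereal_sup_EFin //; last by exists `|q 0|, 0.
  by rewrite -(image_comp (fun n => `|q n|) EFin setT).
have zle n : `|S (eL n)| <= Mq.
  rewrite -lee_fin; apply: le_trans (_ : opnorm S <= Mq%:E)%E.
    by apply: ereal_sup_ubound; exists (eL n) => //; exact: eL_ball.
  rewrite nS; apply: ge_ereal_sup => _ [a aB <-]; rewrite lee_fin.
  apply: le_trans (Top_le bq a) _.
  move: aB; rewrite closed_ballE // /closed_ball_ /= sub0r normrN => a1.
  rewrite -[X in _ <= X]mulr1 ler_wpM2l //; exact: (bsM_ge0 bq).
have qle n : `|pi (x n)| <= `|S (eL n)|.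
  rewrite -[pi (x n)]/(bs bq n) -(Top_eL bq n) -(piS (eL n)) -lee_fin qn.
  by apply: ge_ereal_inf; exists (`|S (eL n) - 0|)%:E; [exists 0|rewrite subr0].
rewrite sqE; apply/eqP; rewrite eq_le; apply/andP; split.
  by apply: ge_ereal_sup => _ [n _ <-]; rewrite lee_fin.
rewrite -sqE; apply: ge_ereal_sup => _ [n _ <-].
apply: le_trans (_ : (`|S (eL n)|)%:E <= _)%E; first by rewrite lee_fin.
by apply: ereal_sup_ubound; exists n.
Qed.
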